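(* Let $\mathbbm{k}$ be a field and $n\ge 2$. The ideal $J_n\subset R$ is a mesoprime binomial ideal whose associated lattice is $L'_n$; that is, \[J_n=\langle x^{u^+}-x^{u^-} : u\in L'_n\rangle,\] so that $R/J_n$ is the group-algebra-type quotient attached to $L'_n$ (the lattice ideal of $L'_n$).
   Context: $R=\mathbbm{k}[x_{ij}:1\le i\le j\le n]$ with the convention $x_{ij}=x_{ji}$; exponent vectors live in $\mathbb{N}^{\binom{n+1}{2}}$ with standard basis $e_{ij}$ ($e_{ij}=e_{ji}$). For $u\in\mathbb{Z}^{\binom{n+1}{2}}$, $u=u^+-u^-$ with $u^+,u^-\ge 0$ of disjoint support. $J_n$ is the ideal generated by all principal $2$-minors $x_{ii}x_{jj}-x_{ij}^2$ ($i,j\in[n]$) of the symmetric matrix $(x_{ij})$. For $i,j,k,l\in[n]$, $[ij|kl]:=e_{ik}+e_{jl}-e_{il}-e_{jk}$, and $L'_n$ is the lattice generated by the $[ij|ij]$, $i,j\in[n]$. (A mesoprime binomial ideal without monomials, in the sense of Kahle–Miller, with associated lattice $L$ and trivial character is exactly the lattice ideal $\langle x^{u^+}-x^{u^-}:u\in L\rangle$.) *)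

(* Defs.v *)
From HB Require Import structures.
From mathcomp Require Import all_boot all_order all_algebra.
From mathcomp Require Import mpoly.
Set Implicit Arguments. Unset Strict Implicit. Unset Printing Implicit Defensive.
Import Order.TTheory GRing.Theory Num.Theory.
Local Open Scope ring_scope.

(* Index set of the variables x_ij, 1 <= i <= j <= n (0-based here). *)
Definition symidx (n : nat) := {p : 'I_n * 'I_n | (p.1 <= p.2)%N}.

Definition spair n (i j : 'I_n) : 'I_n * 'I_n :=
  if (i <= j)%N then (i, j) else (j, i).

Lemma spair_ok n (i j : 'I_n) : ((spair i j).1 <= (spair i j).2)%N.
Proof. rewrite /spair; case: (leqP i j) => h //=; exact: ltnW. Qed.

Definition sym n (i j : 'I_n) : symidx n := exist _ (spair i j) (spair_ok i j).

(* the polynomial ring R = k[x_ij : i <= j] *)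
Definition Rpoly (k : fieldType) (n : nat) := {mpoly k[#|{: symidx n}|]}.

Definition xv (k : fieldType) n (t : symidx n) : Rpoly k n := 'X_(enum_rank t).
Definition xx (k : fieldType) n (i j : 'I_n) : Rpoly k n := xv k (sym i j).

Definition mono (k : fieldType) n (a : symidx n -> nat) : Rpoly k n :=
  \prod_(t : symidx n) xv k t ^+ a t.

Definition evec n := {ffun symidx n -> int}.
Definition ee n (t0 : symidx n) : evec n := [ffun t => ((t == t0) : nat)%:Z].
Definition eij n (i j : 'I_n) : evec n := ee (sym i j).

Definition bracket n (i j k l : 'I_n) : evec n :=
  eij i k + eij j l - eij i l - eij j k.

Definition inLp n (u : evec n) : Prop :=
  exists c : 'I_n -> 'I_n -> int,
    u = \sum_(i < n) \sum_(j < n) bracket i j i j *~ c i j.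

Definition upos n (u : evec n) (t : symidx n) : nat := `|Num.max (u t) 0|%N.
Definition uneg n (u : evec n) (t : symidx n) : nat := `|Num.max (- u t) 0|%N.

Definition lbinom (k : fieldType) n (u : evec n) : Rpoly k n :=
  mono k (upos u) - mono k (uneg u).

Definition in_ideal (A : comNzRingType) (S : A -> Prop) (p : A) : Prop :=
  exists s : seq (A * A),
    (forall q, q \in s -> S q.2) /\ p = \sum_(q <- s) q.1 * q.2.

Definition Jgen (k : fieldType) n (p : Rpoly k n) : Prop :=
  exists i j : 'I_n, p = xx k i i * xx k j j - xx k i j ^+ 2.

Definition Lgen (k : fieldType) n (p : Rpoly k n) : Prop :=
  exists u : evec n, inLp u /\ p = lbinom k u.

(* Main.v *)
Require Import Defs.
From mathcomp Require Import all_boot all_order all_algebra.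
From mathcomp Require Import mpoly.
From mathcomp Require Import zify.
Set Implicit Arguments. Unset Strict Implicit. Unset Printing Implicit Defensive.
Import Order.TTheory GRing.Theory Num.Theory.
Local Open Scope ring_scope.

Section Ideal.
Variable A : comNzRingType.
Implicit Types S T : A -> Prop.

Lemma ideal0 S : in_ideal S 0.
Proof. by exists [::]; split => //; rewrite big_nil. Qed.

Lemma ideal_add S p q : in_ideal S p -> in_ideal S q -> in_ideal S (p + q).
Proof.
move=> [s1 [h1 ->]] [s2 [h2 ->]]; exists (s1 ++ s2); split; last by rewrite big_cat.
by move=> x; rewrite mem_cat => /orP[]; [exact: h1|exact: h2].
Qed.

Lemma ideal_mull S r p : in_ideal S p -> in_ideal S (r * p).
Proof.
move=> [s [h ->]]; exists [seq (r * q.1, q.2) | q <- s]; split.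
  by move=> x /mapP [q qs ->]; exact: (h _ qs).
by rewrite big_map mulr_sumr; apply: eq_bigr => q _; rewrite mulrA.
Qed.

Lemma ideal_opp S p : in_ideal S p -> in_ideal S (- p).
Proof. by move=> h; rewrite -mulN1r; exact: ideal_mull. Qed.

Lemma ideal_sub S p q : in_ideal S p -> in_ideal S q -> in_ideal S (p - q).
Proof. by move=> hp hq; apply: ideal_add => //; exact: ideal_opp. Qed.

Lemma ideal_gen S g : S g -> in_ideal S g.
Proof.
move=> h; exists [:: (1, g)]; split; last by rewrite big_seq1 mul1r.
by move=> q; rewrite mem_seq1 => /eqP ->.
Qed.

Lemma ideal_trans S T p : (forall g, S g -> in_ideal T g) -> in_ideal S p -> in_ideal T p.
Proof.
move=> hST [s [h ->]]; elim: s h => [|q s IH] h; first by rewrite big_nil; exact: ideal0.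
rewrite big_cons; apply: ideal_add; last by apply: IH => x xs; apply: h; rewrite inE xs orbT.
by apply: ideal_mull; apply: hST; apply: h; rewrite inE eqxx.
Qed.
End Ideal.

Section Sym.
Variable n : nat.
Implicit Types i j l m : 'I_n.
Implicit Types s t : symidx n.

Definition offd t := (val t).1 != (val t).2.

Lemma sym_val t : t = sym (val t).1 (val t).2.
Proof. by case: t => [[i j] h]; apply: val_inj; rewrite /= /spair h. Qed.

Lemma symC i j : sym i j = sym j i.
Proof.
apply: val_inj; rewrite /= /spair.
case: (leqP i j) => h1; case: (leqP j i) => h2 //.
  have e : i = j by apply: val_inj; apply/eqP; rewrite eqn_leq h1 h2.
  by rewrite e.
by have := ltn_trans h1 h2; rewrite ltnn.
Qed.

Lemma sym_eq i j l m : (sym i j == sym l m) = ((i == l) && (j == m)) || ((i == m) && (j == l)).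
Proof.
apply/eqP/idP => [/(congr1 val) /=|].
  by rewrite /spair; case: leqP => _; case: leqP => _ [-> ->]; rewrite !eqxx ?orbT.
by case/orP => /andP[/eqP -> /eqP ->] //; exact: symC.
Qed.

Lemma offd_sym i j : offd (sym i j) = (i != j).
Proof. by rewrite /offd /= /spair; case: leqP => //= _; rewrite eq_sym. Qed.

End Sym.

Lemma ffD (T : finType) (f g : {ffun T -> int}) x : (f + g) x = f x + g x.
Proof. by rewrite [f + g]/+%R /= ffunE. Qed.
Lemma ffN (T : finType) (f : {ffun T -> int}) x : (- f) x = - f x.
Proof. by rewrite [- f]/-%R /= ffunE. Qed.
Lemma ffB (T : finType) (f g : {ffun T -> int}) x : (f - g) x = f x - g x.
Proof. by rewrite ffD ffN. Qed.

Section Main.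
Variables (k : fieldType) (n : nat).
Implicit Types (i j l m : 'I_n) (s t : symidx n) (a b : symidx n -> nat).
Local Notation J := (in_ideal (@Jgen k n)).

Lemma diag_neq s l : offd s -> (s == sym l l) = false.
Proof. by move=> os; apply/negbTE/eqP => e; move: os; rewrite e offd_sym eqxx. Qed.

Lemma bracketE i j s : bracket i j i j s =
  ((s == sym i i) : nat)%:Z + ((s == sym j j) : nat)%:Z - 2 * ((s == sym i j) : nat)%:Z.
Proof.
rewrite /bracket !ffB !ffD /eij /ee !ffunE (symC j i).
by case: (s == sym i i); case: (s == sym j j); case: (s == sym i j).
Qed.

Lemma mono_ext a b : (forall t, a t = b t) -> mono k a = mono k b.
Proof. by move=> h; apply: eq_bigr => t _; rewrite h. Qed.

Lemma monoD a b : mono k (fun t => a t + b t)%N = mono k a * mono k b.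
Proof. by rewrite /mono -big_split; apply: eq_bigr => t _; rewrite exprD. Qed.

Lemma mono1 t0 : mono k (fun t => (t == t0 : nat)) = xv k t0.
Proof.
rewrite /mono (bigD1 t0) //= eqxx expr1 big1 ?mulr1 // => t /negbTE ->.
exact: expr0.
Qed.

Lemma mono2 t0 : mono k (fun t => 2 * (t == t0 : nat))%N = xv k t0 ^+ 2.
Proof.
rewrite (@mono_ext _ (fun t => (t == t0 : nat) + (t == t0 : nat))%N).
  by rewrite monoD mono1 expr2.
by move=> t; rewrite mul2n addnn.
Qed.

Definition msr a := (\sum_t offd t * a t)%N.

Lemma step a t : offd t -> (1 < a t)%N -> exists a' : symidx n -> nat,
  [/\ (msr a' < msr a)%N,
      (forall s, (a' s)%:Z = (a s)%:Z + bracket (val t).1 (val t).2 (val t).1 (val t).2 s)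
    & J (mono k a - mono k a')].
Proof.
move=> ot at2.
set i := (val t).1; set j := (val t).2.
have ht : t = sym i j := sym_val t.
have ij : i != j := ot.
pose c s := (a s - 2 * (s == t))%N.
have tii : (t == sym i i) = false by apply: diag_neq.
have tjj : (t == sym j j) = false by apply: diag_neq.
exists (fun s => c s + ((s == sym i i) + (s == sym j j)))%N; split.
- rewrite /msr (bigD1 t) // [X in (_ < X)%N](bigD1 t) //=.
  rewrite -addSn; apply: leq_add.
    by rewrite ot /c eqxx tii tjj /=; lia.
  apply: leq_sum => s st; case os: (offd s); rewrite ?mul0n // !mul1n.
  by rewrite /c (negbTE st) !diag_neq // muln0 subn0 addn0.
- move=> s; rewrite bracketE /c -ht.
  case: (eqVneq s t) => [->|st]; first by rewrite tii tjj /=; lia.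
  by case: (s == sym i i); case: (s == sym j j) => /=; lia.
- have ea : mono k a = mono k c * xv k t ^+ 2.
    rewrite -mono2 -monoD; apply: mono_ext => s; rewrite /c.
    case: (eqVneq s t) => [->|_]; last by rewrite muln0 subn0 addn0.
    by rewrite /= muln1 subnK.
  have ea' : mono k (fun s => c s + ((s == sym i i) + (s == sym j j)))%N
      = mono k c * (xx k i i * xx k j j).
    by rewrite monoD monoD !mono1.
  rewrite ea ea' -mulrBr.
  have -> : xv k t ^+ 2 - xx k i i * xx k j j = -1 * (xx k i i * xx k j j - xx k i j ^+ 2).
    by rewrite /xx -ht mulN1r opprB.
  rewrite mulrA; apply: ideal_mull; apply: ideal_gen; by exists i, j.
Qed.

Definition Pv (u : symidx n -> int) :=
  (forall t, offd t -> exists q : int, u t = q * 2) /\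
  (forall l, u (sym l l) + \sum_(m < n) u (sym l m) = 0).

Lemma Pext (f g : symidx n -> int) : (forall t, f t = g t) -> Pv f -> Pv g.
Proof.
move=> e [h1 h2]; split => [t ot|l]; first by rewrite -e; exact: h1.
rewrite -e -(eq_bigr _ (fun m _ => e (sym l m))); exact: h2.
Qed.

Lemma P0 : Pv (fun _ => 0).
Proof. by split => [t _|l]; [exists 0; rewrite mul0r | rewrite big1 ?addr0]. Qed.

Lemma PD f g : Pv f -> Pv g -> Pv (fun t => f t + g t).
Proof.
move=> [f1 f2] [g1 g2]; split => [t ot|l].
  have [q1 e1] := f1 t ot; have [q2 e2] := g1 t ot.
  by exists (q1 + q2); rewrite e1 e2 mulrDl.
by rewrite big_split /= addrACA f2 g2 addr0.
Qed.

Lemma PZ f z : Pv f -> Pv (fun t => f t * z).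
Proof.
move=> [f1 f2]; split => [t ot|l].
  have [q1 e1] := f1 t ot; by exists (q1 * z); rewrite e1 mulrAC.
by rewrite -mulr_suml -mulrDl f2 mul0r.
Qed.

Lemma Psum (I : Type) (r : seq I) (F : I -> symidx n -> int) :
  (forall x : I, Pv (F x)) -> Pv (fun t => \sum_(x <- r) F x t).
Proof.
move=> h; elim: r => [|x r IH].
  by apply: (Pext _ P0) => t; rewrite big_nil.
by apply: (Pext _ (PD (h x) IH)) => t; rewrite big_cons.
Qed.

Lemma Pbr i j : Pv (fun s => bracket i j i j s).
Proof.
split => [t ot|l].
  by exists (- ((t == sym i j) : nat)%:Z); rewrite bracketE !diag_neq //= mulNr; lia.
case: (eqVneq i j) => [<-|ij].
  have z s : bracket i i i i s = 0.
    by rewrite bracketE; case: (s == sym i i).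
  by rewrite z big1 ?addr0 // => m _; exact: z.
have ji : j != i by rewrite eq_sym.
rewrite (bigD1 i) //= (bigD1 j) //= big1 => [|m /andP[mi mj]]; last first.
  by rewrite bracketE !sym_eq (negbTE mi) (negbTE mj) !andbF.
rewrite !bracketE !sym_eq.
case: (eqVneq l i) => [e|li].
  by subst l; rewrite !eqxx (negbTE ij) (negbTE ji).
case: (eqVneq l j) => [e|lj].
  by subst l; rewrite !eqxx (negbTE ij) (negbTE ji).
have il : i != l by rewrite eq_sym.
have jl : j != l by rewrite eq_sym.
by rewrite ?(negbTE li) ?(negbTE lj) ?(negbTE il) ?(negbTE jl) ?(negbTE ij) ?(negbTE ji) ?eqxx ?andbF ?andbT /=.
Qed.

Lemma inLp_P (u : evec n) : inLp u -> Pv (fun s => u s).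
Proof.
move=> [c ->].
apply: (Pext (f := fun s => \sum_(i < n) \sum_(j < n) bracket i j i j s * c i j)).
  move=> s; rewrite sum_ffunE; apply: eq_bigr => i _; rewrite sum_ffunE.
  by apply: eq_bigr => j _; rewrite ffunMzE mulrzz.
apply: Psum => i; apply: Psum => j; apply: PZ; exact: Pbr.
Qed.

Lemma term a b : (forall t, offd t -> a t <= 1)%N -> (forall t, offd t -> b t <= 1)%N ->
  Pv (fun s => (a s)%:Z - (b s)%:Z) -> forall s, a s = b s.
Proof.
move=> ha hb [h1 h2].
have off t : offd t -> a t = b t.
  move=> ot; have [q e] := h1 t ot; have := ha t ot; have := hb t ot; lia.
move=> s; case os: (offd s); first exact: off.
have e : (val s).1 = (val s).2 by apply/eqP; move/negbFE: os.
have -> : s = sym (val s).1 (val s).1 by rewrite {1}(sym_val s) e.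
have := h2 (val s).1; rewrite (bigD1 (val s).1) //= big1 => [|m ml].
  by lia.
by rewrite off ?subrr // offd_sym eq_sym.
Qed.

Lemma red N : forall a b, (msr a + msr b < N)%N ->
  Pv (fun s => (a s)%:Z - (b s)%:Z) -> J (mono k a - mono k b).
Proof.
elim: N => [|N IH] a b //= hN hP.
case: (pickP (fun t => offd t && (1 < a t)%N)) => [t /andP[ot at2]|noa].
  have [a' [ma ea ja]] := step ot at2.
  have -> : mono k a - mono k b = (mono k a - mono k a') + (mono k a' - mono k b).
    by rewrite addrA subrK.
  apply: ideal_add => //; apply: IH; first by lia.
  apply: (Pext _ (PD hP (Pbr (val t).1 (val t).2))) => s.
  by rewrite ea addrAC.
case: (pickP (fun t => offd t && (1 < b t)%N)) => [t /andP[ot bt2]|nob].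
  have [b' [mb eb jb]] := step ot bt2.
  have -> : mono k a - mono k b = (mono k a - mono k b') - (mono k b - mono k b').
    by rewrite opprB addrA subrK.
  apply: ideal_sub => //; apply: IH; first by lia.
  apply: (Pext _ (PD hP (PZ (-1) (Pbr (val t).1 (val t).2)))) => s.
  by rewrite eb mulrN1 opprD addrA.
rewrite (@mono_ext a b) ?subrr; first exact: ideal0.
apply: term => // t ot.
  by move: (noa t) => /=; rewrite ot /= => /negbT; rewrite -leqNgt.
by move: (nob t) => /=; rewrite ot /= => /negbT; rewrite -leqNgt.
Qed.

End Main.

Lemma inLp_br n (i j : 'I_n) : inLp (bracket i j i j).
Proof.
exists (fun a b => (((a == i) && (b == j)) : nat)%:Z).
rewrite (bigD1 i) //= (bigD1 j) //= !eqxx /= mulr1z.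
rewrite big1 => [|b bj]; last by rewrite (negbTE bj) /= mulr0z.
rewrite big1 => [|a ai]; first by rewrite !addr0.
by apply: big1 => b _; rewrite (negbTE ai) /= mulr0z.
Qed.

Lemma upos_uneg n (u : evec n) s : ((upos u s)%:Z - (uneg u s)%:Z) = u s.
Proof.
rewrite /upos /uneg; lia.
Qed.

Theorem proposition2p4 (k : fieldType) (n : nat) (hn : (2 <= n)%N) :
  forall p : Rpoly k n, in_ideal (@Jgen k n) p <-> in_ideal (@Lgen k n) p.
Proof.
move=> p; split; apply: ideal_trans => g.
- move=> [i [j ->]].
  case: (eqVneq i j) => [e|ij].
    by subst j; rewrite expr2 subrr; exact: ideal0.
  apply: ideal_gen; exists (bracket i j i j); split; first exact: inLp_br.
  have ji : j != i by rewrite eq_sym.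
  rewrite /lbinom.
  have -> : mono k (upos (bracket i j i j)) = mono k (fun s => (s == sym i i : nat) + (s == sym j j : nat))%N.
    apply: mono_ext => s; rewrite /upos bracketE.
    case: (eqVneq s (sym i i)) => [->|si].
      by rewrite !sym_eq ?eqxx ?(negbTE ij) ?(negbTE ji) ?andbF ?andbT /=.
    case: (eqVneq s (sym j j)) => [->|sj].
      by rewrite !sym_eq ?eqxx ?(negbTE ij) ?(negbTE ji) ?andbF ?andbT /=.
    by case: (s == sym i j).
  have -> : mono k (uneg (bracket i j i j)) = mono k (fun s => 2 * (s == sym i j : nat))%N.
    apply: mono_ext => s; rewrite /uneg bracketE.
    case: (eqVneq s (sym i i)) => [->|si].
      by rewrite !sym_eq ?eqxx ?(negbTE ij) ?(negbTE ji) ?andbF ?andbT /=.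
    case: (eqVneq s (sym j j)) => [->|sj].
      by rewrite !sym_eq ?eqxx ?(negbTE ij) ?(negbTE ji) ?andbF ?andbT /=.
    by case: (s == sym i j).
  by rewrite monoD !mono1 mono2.
- move=> [u [hu ->]]; rewrite /lbinom.
  apply: (@red k n (msr (upos u) + msr (uneg u)).+1) => //.
  by apply: (Pext _ (inLp_P hu)) => s; rewrite upos_uneg.
Qed.
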